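(* Let $h>0$, let $N_t$ be a positive integer and $T=\sqrt{N_t h/4}$. For $u>0$ and $x\in[0,1]$ let $$f(u,x) = \frac{x}{\pi}\,\frac{1}{\sqrt{u}}\,\frac{e^{\sqrt{u}-T}}{e^{2(\sqrt{u}-T)}+x},\qquad I(x)=\int_0^{4T^2} f(u,x)\,du,\qquad S(x) = h\sum_{j=1}^{N_t} f(jh,x).$$ Then for every $x\in[0,e^{4-2T}]$, $$|I(x)-S(x)| < 2e^{2-T} < 15\,e^{-T}.$$ *)

(* Defs.v *)
From Stdlib Require Import Reals.
From Coquelicot Require Import Coquelicot.
Open Scope R_scope.

Definition Tpar (Nt : nat) (h : R) : R := sqrt (INR Nt * h / 4).

Definition fA2 (T u x : R) : R :=
  x / PI * (1 / sqrt u) * (exp (sqrt u - T) / (exp (2 * (sqrt u - T)) + x)).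

(* S(x) = h * sum_{j=1}^{Nt} f(j h, x)  (Nt >= 1) *)
Definition SA2 (Nt : nat) (h x : R) : R :=
  h * sum_f_R0 (fun j => fA2 (Tpar Nt h) (INR (S j) * h) x) (Nt - 1).

(* Main.v *)
Require Import Defs.
From Stdlib Require Import Reals Lra Lia.
From Coquelicot Require Import Coquelicot.
Open Scope R_scope.

Definition Rb (b:R) := if Rle_dec b 2 then 1 else exp (2-b).
Definition Pb (s:R) := if Rle_dec s 2 then s else 3 - exp (2-s).

Lemma key_exp d : 0 <= d -> d * exp (-d) <= 1 - exp (-d).
Proof.
  intros Hd. pose proof (exp_ineq1_le d) as H1.
  assert (HE : exp d * exp (-d) = 1).
  { rewrite <- exp_plus. replace (d + - d) with 0 by ring. apply exp_0. }
  pose proof (exp_pos (-d)). nra.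
Qed.

Lemma P_step a b : 0 <= a -> a <= b -> (b - a) * Rb b <= Pb b - Pb a.
Proof.
  intros Ha Hab. unfold Rb, Pb.
  destruct (Rle_dec b 2) as [Hb|Hb]; destruct (Rle_dec a 2) as [Ha2|Ha2]; try lra.
  - pose proof (key_exp (b-2)) as K.
    replace (- (b-2)) with (2-b) in K by ring.
    assert (exp (2-b) <= 1).
    { rewrite <- exp_0. apply Rlt_le, exp_increasing. lra. }
    pose proof (exp_pos (2-b)). nra.
  - pose proof (key_exp (b-a)) as K.
    assert (E : exp (2-b) = exp (2-a) * exp (-(b-a))).
    { rewrite <- exp_plus. f_equal. ring. }
    rewrite E. pose proof (exp_pos (2-a)). nra.
Qed.

Lemma Pb_lt3 s : Pb s < 3.
Proof. unfold Pb. destruct (Rle_dec s 2). lra. pose proof (exp_pos (2-s)). lra. Qed.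

Lemma Pb0 : Pb 0 = 0.
Proof. unfold Pb. destruct (Rle_dec 0 2); lra. Qed.

Lemma div_le_helper N D M : 0 < D -> N <= M * D -> N / D <= M.
Proof.
  intros HD H. apply Rmult_le_reg_r with D; auto. unfold Rdiv.
  rewrite Rmult_assoc, Rinv_l by lra. lra.
Qed.

Lemma psi_bound T b x : 0 <= x -> x <= exp (4 - 2*T) ->
  0 <= x * (exp (b - T) / (exp (2*(b-T)) + x)) <= exp (2 - T) * Rb b.
Proof.
  intros Hx Hx4.
  set (E := exp (b - T)).
  assert (HE : exp (2*(b-T)) = E * E).
  { unfold E. rewrite <- exp_plus. f_equal. ring. }
  rewrite HE. assert (E > 0) by apply exp_pos.
  assert (HD : 0 < E*E + x) by nra.
  split.
  { apply Rmult_le_pos; auto. apply Rlt_le, Rdiv_lt_0_compat; lra. }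
  replace (x * (E / (E*E + x))) with ((x*E) / (E*E+x)) by (field; lra).
  apply div_le_helper; auto.
  unfold Rb. destruct (Rle_dec b 2) as [Hb|Hb].
  - assert (E <= exp (2 - T)).
    { unfold E. destruct (Req_dec b 2). subst; lra. apply Rlt_le, exp_increasing; lra. }
    nra.
  - assert (EE : exp (2-T) * exp (2-b) * (E*E) = exp (4 - 2*T) * E).
    { unfold E. rewrite <- !exp_plus. f_equal. ring. }
    assert (0 <= exp (2-T) * exp (2-b)) by (apply Rmult_le_pos; apply Rlt_le, exp_pos).
    nra.
Qed.

Lemma tele (c : R) (g : nat -> R) n :
  sum_f_R0 (fun k => c * (g (S k) - g k)) n = c * (g (S n) - g 0%nat).
Proof. induction n; simpl. ring. rewrite IHn. ring. Qed.

Lemma exp2_bound : exp 2 < 7.5.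
Proof.
  assert (H0 : exp (1/128) <= 128/127).
  { pose proof (exp_ineq1_le (-(1/128))) as H.
    assert (HE : exp (1/128) * exp (-(1/128)) = 1).
    { rewrite <- exp_plus. replace (1/128 + - (1/128)) with 0 by ring. apply exp_0. }
    pose proof (exp_pos (1/128)). nra. }
  assert (sq : forall a b c, exp a <= b -> b * b <= c -> exp (2*a) <= c).
  { intros a b c Ha Hb. replace (2*a) with (a+a) by ring. rewrite exp_plus.
    pose proof (exp_pos a). nra. }
  pose proof (sq _ _ 1.01582 H0 ltac:(lra)) as H1.
  pose proof (sq _ _ 1.0319 H1 ltac:(lra)) as H2.
  pose proof (sq _ _ 1.06482 H2 ltac:(lra)) as H3.
  pose proof (sq _ _ 1.13385 H3 ltac:(lra)) as H4.
  pose proof (sq _ _ 1.28562 H4 ltac:(lra)) as H5.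
  pose proof (sq _ _ 1.65282 H5 ltac:(lra)) as H6.
  pose proof (sq _ _ 2.73182 H6 ltac:(lra)) as H7.
  pose proof (sq _ _ 7.46285 H7 ltac:(lra)) as H8.
  assert (E : 2*(2*(2*(2*(2*(2*(2*(2*(1/128)))))))) = 2) by field. rewrite E in H8. lra.
Qed.

Lemma term_bound h T x k : 0 < h -> 0 <= x -> x <= exp (4 - 2*T) ->
  0 <= fA2 T (INR (S k) * h) x * h <=
  (2 / PI * exp (2 - T)) * (Pb (sqrt (INR (S k) * h)) - Pb (sqrt (INR k * h))).
Proof.
  intros Hh Hx Hx4.
  set (u := INR (S k) * h).
  assert (Hk := pos_INR k).
  assert (Hu : 0 < u) by (unfold u; rewrite S_INR; nra).
  set (b := sqrt u). set (a := sqrt (INR k * h)).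
  assert (Hb : 0 < b) by (apply sqrt_lt_R0; auto).
  assert (Hbb : b * b = u) by (apply sqrt_sqrt; lra).
  assert (Haa : a * a = INR k * h) by (apply sqrt_sqrt; nra).
  assert (Ha : 0 <= a) by apply sqrt_pos.
  assert (Hab : a <= b) by (apply sqrt_le_1_alt; unfold u; rewrite S_INR; nra).
  assert (Hu2 : u = INR k * h + h) by (unfold u; rewrite S_INR; ring).
  set (psi := x * (exp (b - T) / (exp (2*(b-T)) + x))).
  assert (HPI : 0 < PI) by apply PI_RGT_0.
  assert (Eq : fA2 T u x * h = (h / b) * psi / PI).
  { unfold fA2, psi. fold b. field. pose proof (exp_pos (2*(b-T))). repeat split; lra. }
  rewrite Eq.
  destruct (psi_bound T b x Hx Hx4) as [Hp1 Hp2]. fold psi in Hp1, Hp2.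
  assert (Hq : 0 <= h / b <= 2 * (b - a)).
  { split. apply Rlt_le, Rdiv_lt_0_compat; lra.
    apply div_le_helper; auto. assert (h = b*b - a*a) by lra. pose proof (Rle_0_sqr (b - a)). unfold Rsqr in *. nra. }
  assert (HR : 0 <= Rb b).
  { unfold Rb. destruct (Rle_dec b 2). lra. apply Rlt_le, exp_pos. }
  pose proof (P_step a b Ha Hab) as HP.
  pose proof (exp_pos (2 - T)) as He.
  assert (H1 : h / b * psi <= 2 * (b - a) * (exp (2-T) * Rb b)).
  { apply Rmult_le_compat; lra. }
  assert (H2 : 2 * (b - a) * (exp (2-T) * Rb b) <= 2 * exp (2-T) * (Pb b - Pb a)).
  { replace (2 * (b - a) * (exp (2-T) * Rb b)) with (2 * exp (2-T) * ((b-a) * Rb b)) by ring.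
    apply Rmult_le_compat_l; lra. }
  split.
  - apply Rmult_le_pos. apply Rmult_le_pos; lra. apply Rlt_le, Rinv_0_lt_compat; lra.
  - replace (2 / PI * exp (2 - T) * (Pb b - Pb a)) with ((2 * exp (2-T) * (Pb b - Pb a)) / PI) by (field; lra).
    unfold Rdiv. apply Rmult_le_compat_r. apply Rlt_le, Rinv_0_lt_compat; lra. lra.
Qed.

Lemma S_bound h Nt x T : 0 < h -> (1 <= Nt)%nat -> 0 <= x -> x <= exp (4 - 2*T) ->
  0 <= h * sum_f_R0 (fun j => fA2 T (INR (S j) * h) x) (Nt - 1) < 2 * exp (2 - T).
Proof.
  intros Hh HN Hx Hx4.
  rewrite scal_sum. split.
  - apply cond_pos_sum. intro k. apply (term_bound h T x k); auto.
  - eapply Rle_lt_trans.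
    { apply sum_Rle. intros k _. apply (term_bound h T x k); auto. }
    rewrite (tele _ (fun k => Pb (sqrt (INR k * h)))).
    replace (S (Nt - 1)) with Nt by lia.
    simpl INR at 2. rewrite Rmult_0_l, sqrt_0, Pb0, Rminus_0_r.
    pose proof (Pb_lt3 (sqrt (INR Nt * h))) as HP.
    pose proof (exp_pos (2 - T)) as He.
    pose proof PI2_3_2 as HPI.
    assert (HPI' : 0 < PI) by lra.
    set (P := Pb (sqrt (INR Nt * h))) in *.
    replace (2 / PI * exp (2 - T) * P) with (2 * exp (2 - T) * (P / PI)) by (field; lra).
    assert (P / PI < 1).
    { apply Rmult_lt_reg_r with PI; auto. unfold Rdiv. rewrite Rmult_assoc, Rinv_l by lra. lra. }
    nra.
Qed.

Lemma gen_int (f F : R -> R) B : 0 < B ->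
  (forall u, 0 < u -> is_derive F u (f u)) ->
  (forall u, 0 < u -> continuous f u) ->
  continuous F 0 ->
  is_RInt_gen f (at_right 0) (at_point B) (F B - F 0).
Proof.
  intros HB Hd Hc HF0.
  intros P HP.
  assert (HC : continuous (fun a => F B - F a) 0).
  { apply (continuous_minus (fun _ => F B) F 0). apply continuous_const. exact HF0. }
  specialize (HC P HP). simpl in HC.
  apply Filter_prod with (Q := fun a => 0 < a /\ P (F B - F a)) (R := fun b => b = B).
  - unfold at_right, within. unfold filtermap in HC. eapply filter_imp; [| exact HC]. intros a Ha Hpos. split; auto.
  - unfold at_point. reflexivity.
  - intros a b [Ha HPa] Eb. subst b. exists (F B - F a). split; [|exact HPa].
    simpl.
    assert (Hm : 0 < Rmin a B) by (apply Rmin_pos; auto).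
    apply (is_RInt_derive F f a B).
    + intros t Ht. apply Hd. lra.
    + intros t Ht. apply Hc. lra.
Qed.

Lemma f_cont T x u : 0 <= x -> 0 < u -> continuous (fun u => fA2 T u x) u.
Proof.
  intros Hx Hu. apply (@ex_derive_continuous R_AbsRing R_NormedModule). unfold fA2. auto_derive.
  pose proof (sqrt_lt_R0 u Hu). pose proof (exp_pos (2 * (sqrt u + - T))).
  repeat split; lra.
Qed.

Lemma F_deriv T x u : 0 < x -> 0 < u ->
  is_derive (fun u => 2 * sqrt x / PI * atan (exp (sqrt u - T) / sqrt x)) u (fA2 T u x).
Proof.
  intros Hx Hu.
  assert (Hc : 0 < sqrt x) by (apply sqrt_lt_R0; auto).
  assert (Hcc : sqrt x * sqrt x = x) by (apply sqrt_sqrt; lra).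
  assert (Hs : 0 < sqrt u) by (apply sqrt_lt_R0; auto).
  assert (HPI : 0 < PI) by apply PI_RGT_0.
  auto_derive. auto.
  unfold fA2.
  set (c := sqrt x) in *. set (s := sqrt u) in *.
  assert (HE : exp (2 * (s - T)) = exp (s + - T) * exp (s + - T)).
  { rewrite <- exp_plus. f_equal. ring. }
  rewrite HE. replace (s - T) with (s + - T) by ring.
  set (E := exp (s + - T)). assert (0 < E) by apply exp_pos.
  rewrite <- Hcc. field. repeat split; try lra; nra.
Qed.

Lemma F_cont0 T x : 0 < x -> continuous (fun u => 2 * sqrt x / PI * atan (exp (sqrt u - T) / sqrt x)) 0.
Proof.
  intros Hx.
  apply (continuous_comp sqrt (fun s => 2 * sqrt x / PI * atan (exp (s - T) / sqrt x))).
  apply continuous_sqrt.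
  apply (@ex_derive_continuous R_AbsRing R_NormedModule). auto_derive.
  pose proof (sqrt_lt_R0 x Hx). lra.
Qed.

Lemma I_exists T x B : 0 <= x -> 0 < B -> sqrt x <= exp (2 - T) ->
  exists I, is_RInt_gen (fun u => fA2 T u x) (at_right 0) (at_point B) I /\
            0 <= I < 2 * exp (2 - T).
Proof.
  intros Hx HB Hsx. pose proof (exp_pos (2 - T)) as He.
  destruct (Req_dec x 0) as [Hx0|Hx0].
  - subst x. exists (0 - 0). split; [|lra].
    apply (gen_int (fun u => fA2 T u 0) (fun _ => 0) B HB).
    + intros u Hu. assert (E : fA2 T u 0 = 0) by (unfold fA2, Rdiv; ring).
      rewrite E. apply (@is_derive_const R_AbsRing R_NormedModule).
    + intros u Hu. apply f_cont; lra.
    + apply continuous_const.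
  - assert (Hxp : 0 < x) by lra.
    set (F := fun u => 2 * sqrt x / PI * atan (exp (sqrt u - T) / sqrt x)).
    exists (F B - F 0). split.
    + apply gen_int; auto.
      * intros u Hu. apply F_deriv; auto.
      * intros u Hu. apply f_cont; lra.
      * apply F_cont0; auto.
    + unfold F. rewrite sqrt_0.
      assert (Hc : 0 < sqrt x) by (apply sqrt_lt_R0; auto).
      assert (HPI : 0 < PI) by apply PI_RGT_0.
      assert (HsB : 0 < sqrt B) by (apply sqrt_lt_R0; auto).
      assert (Hlt : exp (0 - T) / sqrt x < exp (sqrt B - T) / sqrt x).
      { unfold Rdiv. apply Rmult_lt_compat_r. apply Rinv_0_lt_compat; auto.
        apply exp_increasing. lra. }
      pose proof (atan_increasing _ _ Hlt) as Ha.
      pose proof (atan_bound (exp (0 - T) / sqrt x)).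
      pose proof (atan_bound (exp (sqrt B - T) / sqrt x)).
      set (d := atan (exp (sqrt B - T) / sqrt x) - atan (exp (0 - T) / sqrt x)).
      assert (Hd : 0 < d < PI) by (unfold d; lra).
      replace (2 * sqrt x / PI * atan (exp (sqrt B - T) / sqrt x) -
               2 * sqrt x / PI * atan (exp (0 - T) / sqrt x)) with (2 * sqrt x * (d / PI))
        by (unfold d; field; lra).
      assert (0 < d / PI < 1).
      { split. apply Rdiv_lt_0_compat; lra.
        apply Rmult_lt_reg_r with PI; auto. unfold Rdiv. rewrite Rmult_assoc, Rinv_l by lra. lra. }
      split; nra.
Qed.

Theorem lemmaA2 (h : R) (Nt : nat) (x : R) :
  0 < h -> (1 <= Nt)%nat ->
  0 <= x -> x <= 1 -> x <= exp (4 - 2 * Tpar Nt h) ->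
  exists I : R,
    is_RInt_gen (fun u => fA2 (Tpar Nt h) u x) (at_right 0)
      (at_point (4 * (Tpar Nt h) ^ 2)) I /\
    Rabs (I - SA2 Nt h x) < 2 * exp (2 - Tpar Nt h) /\
    2 * exp (2 - Tpar Nt h) < 15 * exp (- Tpar Nt h).
Proof.
  intros Hh HN Hx Hx1 Hx4.
  set (T := Tpar Nt h) in *.
  assert (HT : 0 < T).
  { unfold T, Tpar. apply sqrt_lt_R0.
    assert (1 <= INR Nt) by (apply (le_INR 1); auto). simpl in *. nra. }
  assert (HB : 0 < 4 * T ^ 2) by nra.
  assert (Hsx : sqrt x <= exp (2 - T)).
  { replace (exp (2 - T)) with (sqrt (exp (4 - 2 * T))).
    apply sqrt_le_1_alt; auto.
    replace (exp (4 - 2 * T)) with (exp (2 - T) * exp (2 - T))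
      by (rewrite <- exp_plus; f_equal; ring).
    apply sqrt_square. apply Rlt_le, exp_pos. }
  destruct (I_exists T x (4 * T ^ 2) Hx HB Hsx) as [I [HI [HI0 HI1]]].
  exists I. split; [exact HI|].
  pose proof (S_bound h Nt x T Hh HN Hx Hx4) as [HS0 HS1].
  unfold SA2. fold T.
  split.
  - unfold Rabs. destruct (Rcase_abs _); lra.
  - replace (exp (2 - T)) with (exp 2 * exp (- T)) by (rewrite <- exp_plus; f_equal; ring).
    pose proof exp2_bound. pose proof (exp_pos (- T)). nra.
Qed.
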